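(* Let $A$ be a real $n\times n$ matrix with $n\ge2$ and strictly negative diagonal entries. If $A$ is stable, then some $2\times2$ principal submatrix of $A$ is stable.
   Context: A square matrix is stable if all its eigenvalues have strictly negative real part. A principal submatrix is obtained by restricting rows and columns to the same index set. *)

(* Defs.v *)
From HB Require Import structures.
From mathcomp Require Import all_boot all_order all_algebra.
Set Implicit Arguments. Unset Strict Implicit. Unset Printing Implicit Defensive.
Import Order.TTheory GRing.Theory Num.Theory.
Local Open Scope ring_scope.

Definition stable (C : numClosedFieldType) (n : nat) (A : 'M[C]_n) : Prop :=
  forall z : C, eigenvalue A z -> 'Re z < 0.

Definition pair_idx (n : nat) (i j : 'I_n) : 'I_2 -> 'I_n :=
  fun k => if k == ord0 then i else j.

Definition principal2 (C : numClosedFieldType) (n : nat) (A : 'M[C]_n)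
  (i j : 'I_n) : 'M[C]_2 :=
  mxsub (pair_idx i j) (pair_idx i j) A.

(* Main.v *)
Require Import Defs.
From mathcomp Require Import all_boot all_order all_algebra.
Import Order.TTheory GRing.Theory Num.Theory.
Local Open Scope ring_scope.

Lemma quad_re (C : numClosedFieldType) (a d c z : C) :
  a \is Num.real -> d \is Num.real -> c \is Num.real ->
  a < 0 -> d < 0 -> c < a * d -> (z - a) * (z - d) - c = 0 -> 'Re z < 0.
Proof.
move=> aR dR cR aneg dneg cad H.
have HR := congr1 (fun w : C => 'Re w) H; have HI := congr1 (fun w : C => 'Im w) H.
rewrite /= raddf0 raddfB /= ReM !raddfB /= (Creal_ReP _ aR) (Creal_ReP _ dR) (Creal_ReP _ cR) in HR.
rewrite /= raddf0 raddfB /= ImM !raddfB /= (Creal_ImP _ aR) (Creal_ImP _ dR) (Creal_ImP _ cR) !subr0 in HI.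
rewrite (Creal_ImP _ aR) (Creal_ImP _ dR) !subr0 in HR.
set x := 'Re z in HR HI *; set y := 'Im z in HR HI.
have xR : x \is Num.real by apply: Creal_Re.
rewrite real_ltNge //; apply/negP => x0.
have xa : - a <= x - a by rewrite -[X in X <= _]add0r lerD2r.
have xd : - d <= x - d by rewrite -[X in X <= _]add0r lerD2r.
have na : 0 <= - a by rewrite oppr_ge0 ltW.
have nd : 0 <= - d by rewrite oppr_ge0 ltW.
have : y * ((x - a) + (x - d)) = 0.
  by rewrite mulrDr ![y * _]mulrC -HI (Creal_ReP _ aR) (Creal_ReP _ dR).
move/eqP; rewrite mulf_eq0 => /orP[/eqP y0|].
  rewrite y0 mulr0 subr0 in HR.
  have : a * d <= (x - a) * (x - d) by rewrite -mulrNN ler_pM.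
  move/(lt_le_trans cad); rewrite -subr_gt0 HR.
  by rewrite ltxx.
move/eqP=> E; have : 0 < (x - a) + (x - d).
  apply: ltr_wpDr; first by apply: le_trans xd.
  by apply: (lt_le_trans _ xa); rewrite oppr_gt0.
by rewrite E ltxx.
Qed.
Lemma det2 (R : comNzRingType) (M : 'M[R]_2) :
  \det M = M 0 0 * M 1 1 - M 0 1 * M 1 0.
Proof.
rewrite (expand_det_row _ 0) !big_ord_recl big_ord0 addr0 /cofactor !det_mx11 !mxE /=.
have E1 : lift (0 : 'I_2) (0 : 'I_1) = 1 by apply/val_inj.
have E2 : lift (ord0 : 'I_2) (0 : 'I_1) = 1 by apply/val_inj.
have E3 : lift (ord0 : 'I_2) (ord0 : 'I_1) = 1 by apply/val_inj.
have E4 : lift (lift (ord0 : 'I_2) (ord0 : 'I_1)) (0 : 'I_1) = 0 by apply/val_inj.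
rewrite E4 E3 ?E1 ?E2 /= expr0 expr1 !mul1r mulN1r mulrN.
by [].
Qed.

Lemma eig_det (F : fieldType) n (A : 'M[F]_n) a : eigenvalue A a -> \det (a%:M - A) = 0.
Proof.
move/eigenvalueP=> [v Av_av v_nz]; apply/eqP/det0P; exists v => //.
by rewrite mulmxBr Av_av mul_mx_scalar subrr.
Qed.

Lemma stable2 (C : numClosedFieldType) (B : 'M[C]_2) :
  B 0 0 \is Num.real -> B 1 1 \is Num.real -> B 0 1 * B 1 0 \is Num.real ->
  B 0 0 < 0 -> B 1 1 < 0 -> B 0 1 * B 1 0 < B 0 0 * B 1 1 ->
  forall z : C, eigenvalue B z -> 'Re z < 0.
Proof.
move=> aR dR cR an dn cad z /eig_det; rewrite det2 !mxE /=.
rewrite mulr1n mulr0n !sub0r mulrNN => H.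
exact: (@quad_re _ _ _ _ _ aR dR cR an dn cad H).
Qed.

Lemma eig_trig (C : numClosedFieldType) n (T : 'M[C]_n) (i : 'I_n) :
  is_trig_mx T -> eigenvalue T (T i i).
Proof.
move=> Ttrig; rewrite eigenvalue_root_char char_poly_trig // /root horner_prod.
by rewrite (bigD1 i) //= hornerXsubC subrr mul0r.
Qed.

Lemma eig_conj (C : numClosedFieldType) n (A P : 'M[C]_n) a :
  P \in unitmx -> eigenvalue (P *m A *m invmx P) a -> eigenvalue A a.
Proof.
move=> Pu /eigenvalueP [v Hv vnz]; apply/eigenvalueP; exists (v *m P).
  have E : P *m A = P *m A *m invmx P *m P by rewrite mulmxKV.
  by rewrite -mulmxA E (mulmxA v _ P) Hv -scalemxAl.
by rewrite mulmx_free_eq0 ?row_free_unit.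
Qed.

Theorem mainTheorem13 (C : numClosedFieldType) (n : nat) (A : 'M[C]_n) :
  (2 <= n)%N ->
  (forall i j : 'I_n, A i j \is Num.real) ->
  (forall i : 'I_n, A i i < 0) ->
  stable A ->
  exists i j : 'I_n, i != j /\ stable (principal2 A i j).
Proof.
move=> n2 Areal Aneg Astab.
case: (boolP [exists i, exists j, (i != j) && (A i j * A j i < A i i * A j j)]).
  move=> /existsP[i /existsP[j /andP[ij pos]]]; exists i, j; split => //.
  rewrite /stable /principal2; apply: stable2; rewrite ?mxE /pair_idx /= //.
  exact: rpredM.
move=> Hno; exfalso.
have Hle : forall i j, A i i * A j j - A i j * A j i <= 0.
  move=> i j; case: (eqVneq i j) => [->|ij]; first by rewrite subrr.
  rewrite subr_le0 real_leNgt ?rpredM //; apply/negP => H.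
  by move/existsP: Hno; apply; exists i; apply/existsP; exists j; rewrite ij H.
set S := \sum_i \sum_j (A i i * A j j - A i j * A j i).
have S_le : S <= 0 by apply: sumr_le0 => i _; apply: sumr_le0 => j _; apply: Hle.
have S_real : S \is Num.real.
  by apply: rpred_sum => i _; apply: rpred_sum => j _; rewrite rpredB ?rpredM.
have SE : S = \tr A ^+ 2 - \tr (A *m A).
  rewrite /S; under eq_bigr => i _ do rewrite sumrB.
  rewrite sumrB /mxtrace expr2 mulr_suml; congr (_ - _).
    by apply: eq_bigr => i _; rewrite mulr_sumr.
  by apply: eq_bigr => i _; rewrite mxE.
have n0 : (0 < n)%N by apply: leq_trans n2.
have [P Pun Ptrig] := Schur A n0.
have Pu := unitarymx_unit Pun.
move: Ptrig; rewrite /similar_to /= conjumx // => Ttrig.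
set T := P *m A *m invmx P in Ttrig.
have trT : \tr A = \sum_i T i i.
  rewrite -/(\tr T) /T mxtrace_mulC mulmxA mulVmx // mul1mx //.
have trT2 : \tr (A *m A) = \sum_i T i i ^+ 2.
  have -> : \tr (A *m A) = \tr (T *m T).
    rewrite /T !mulmxA (mulmxKV Pu (P *m A)) (mxtrace_mulC (P *m A *m A)) !mulmxA mulVmx // mul1mx //.
  apply: eq_bigr => i _; rewrite mxE (bigD1 i) //= big1 ?addr0 ?expr2 //.
  move=> k ki; case: (ltngtP i k) => [ik|ki'|/val_inj ik].
  - by move/is_trig_mxP: Ttrig => ->; rewrite ?mul0r.
  - by move/is_trig_mxP: Ttrig => H; rewrite (H _ _ ki') mulr0.
  - by rewrite ik eqxx in ki.
have ReT : forall i, 'Re (T i i) < 0.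
  by move=> i; apply: Astab; apply: (@eig_conj _ _ _ _ _ Pu); apply: eig_trig.
pose x i := 'Re (T i i).
have trR : \tr A \is Num.real by apply: rpred_sum => i _; apply: Areal.
have E1 : \tr A = \sum_i x i by rewrite -(Creal_ReP _ trR) trT raddf_sum.
have ReS : S = (\sum_i x i) * (\sum_i x i) - \sum_i 'Re (T i i ^+ 2).
  rewrite -(Creal_ReP _ S_real) SE raddfB /= expr2 ReMl // (Creal_ReP _ trR) E1.
  by rewrite trT2 raddf_sum.
have L1 : (\sum_i x i) * (\sum_i x i) - \sum_i x i * x i <= S.
  rewrite ReS lerD2l lerN2; apply: ler_sum => i _.
  rewrite expr2 ReM -/(x i) gerDl oppr_le0 -expr2 -realEsqr; exact: Creal_Im.
have L2 : 0 < (\sum_i x i) * (\sum_i x i) - \sum_i x i * x i.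
  have xx : forall i j, 0 < x i * x j by move=> i j; rewrite nmulr_rgt0 ?ReT.
  have -> : (\sum_i x i) * (\sum_i x i) - \sum_i x i * x i =
      \sum_i \sum_(j | j != i) x i * x j.
    rewrite mulr_suml -sumrB; apply: eq_bigr => i _.
    by rewrite mulr_sumr (bigD1 i) //= addrAC subrr add0r.
  pose i0 : 'I_n := Ordinal n0; pose j0 : 'I_n := Ordinal n2.
  have ij0 : j0 != i0 by [].
  rewrite (bigD1 i0) //= (bigD1 j0) //=.
  apply: ltr_wpDr.
    by apply: sumr_ge0 => i _; apply: sumr_ge0 => j _; rewrite ltW.
  apply: ltr_wpDr => //.
  by apply: sumr_ge0 => j _; rewrite ltW.
have := lt_le_trans L2 (le_trans L1 S_le).
by rewrite ltxx.
Qed.
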